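(* Let $\theta\in\mathbb{R}$ be constant and let $Y(t)=\Delta(t)\theta+\xi(t)$ with scalar measurable signals $Y,\Delta$ and $\xi(t)=a\sin(\omega t+\psi)$, $a,\omega>0$, $\psi\in\mathbb{R}$ unknown. Fix $\lambda>0$ and let $(\cdot)_F:=\frac{\lambda^2}{(\mathcal P+\lambda)^2}(\cdot)$ ($\mathcal P=d/dt$), so that $Y_F=\Delta_F\theta+\xi_F$, and set $\varphi(t):=\mathrm{col}(\ddot\Delta_F(t),-\ddot Y_F(t))$, $\mu:=\mathrm{col}(\theta/\omega^2,1/\omega^2)$, $e_2:=\mathrm{col}(0,1)$, $\mathcal A_\xi(t):=\begin{pmatrix}0&\Delta_F(t)\\-\Delta_F(t)&-1\end{pmatrix}$, $b_\xi(t):=\mathrm{col}(-\Delta_F(t)z(t),0)$. Define $\dot z=-z-Y_F$, $z(0)=0$; $\dot r=\mathcal A_\xi r+b_\xi$, $r(0)=0\in\mathbb{R}^2$; $\dot\Omega=\mathcal A_\xi\Omega-e_2\varphi^\top$, $\Omega(0)=0_{2\times2}$; $\dot\Phi_\xi=\mathcal A_\xi\Phi_\xi$, $\Phi_\xi(0)=I_2$. Then for all $t\ge0$, $z(t)-r_2(t)=(\Phi_\xi)_{2,1}(t)\theta+\Omega_{2,1}(t)\mu_1+\Omega_{2,2}(t)\mu_2$.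
   Context: Convention: effects of filter initial conditions (exponentially decaying transients) are neglected, so the filtered sinusoid satisfies exactly $\ddot\xi_F=-\omega^2\xi_F$. *)

(* Defs.v *)
From HB Require Import structures.
From mathcomp Require Import all_boot all_order all_algebra.
From mathcomp Require Import all_classical all_reals all_analysis.
Set Implicit Arguments. Unset Strict Implicit. Unset Printing Implicit Defensive.
Import Order.TTheory GRing.Theory Num.Theory.
Import numFieldNormedType.Exports.
Local Open Scope classical_set_scope.
Local Open Scope ring_scope.

Definition dot {R : realType} (f : R -> R) : R -> R := derive1 f.
Definition ddot {R : realType} (f : R -> R) : R -> R := derive1 (derive1 f).

Definition twice_diff {R : realType} (f : R -> R) (t : R) : Prop :=
  (\forall s \near t, derivable f s 1) /\ derivable (derive1 f) t 1.

(* uF = lam^2/(P+lam)^2 u, i.e. uF'' + 2 lam uF' + lam^2 uF = lam^2 u, for t >= 0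
   (initial conditions of the filter are neglected: no constraint at t = 0). *)
Definition filtered {R : realType} (lam : R) (u uF : R -> R) : Prop :=
  forall t : R, 0 <= t -> twice_diff uF t /\
    ddot uF t + 2 * lam * dot uF t + lam ^+ 2 * uF t = lam ^+ 2 * u t.

(* Main.v *)
Require Import Defs.
From HB Require Import structures.
From mathcomp Require Import all_boot all_order all_algebra.
From mathcomp Require Import all_classical all_reals all_analysis.
From mathcomp Require Import ring lra.
Import Order.TTheory GRing.Theory Num.Theory.
Import numFieldNormedType.Exports.
Local Open Scope classical_set_scope.
Local Open Scope ring_scope.
Set Implicit Arguments.

Section H.
Variable R : realType.
Implicit Types (f g : R -> R) (x c df dg : R).

Lemma dD f g x df dg : is_derive x 1 f df -> is_derive x 1 g dg ->
  is_derive x 1 (fun s => f s + g s) (df + dg).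
Proof. move=> H1 H2; exact: (is_deriveD H1 H2). Qed.
Lemma dB f g x df dg : is_derive x 1 f df -> is_derive x 1 g dg ->
  is_derive x 1 (fun s => f s - g s) (df - dg).
Proof. move=> H1 H2; exact: (is_deriveB H1 H2). Qed.
Lemma dMc f x c df : is_derive x 1 f df ->
  is_derive x 1 (fun s => f s * c) (df * c).
Proof. move=> H1.
have H := is_deriveM H1 (is_derive_cst c x 1).
have -> : (fun s => f s * c) = (f * cst c)%R by [].
apply: (is_derive_eq H); rewrite /GRing.scale /=; ring. Qed.
Lemma dC x c : is_derive x 1 (fun _ : R => c) 0.
Proof. exact: is_derive_cst. Qed.
Lemma dSq f x df : is_derive x 1 f df ->
  is_derive x 1 (fun s => f s ^+ 2) (2 * f x * df).
Proof. move=> H1.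
have H := is_deriveM H1 H1.
have -> : (fun s => f s ^+ 2) = (f * f)%R by apply/funext => s; rewrite expr2.
apply: (is_derive_eq H); rewrite /GRing.scale /=; ring. Qed.

Lemma ddot_lin (DF X Y : R -> R) th t : 0 < t ->
  (forall s, 0 < s -> Y s = DF s * th + X s) ->
  twice_diff DF t -> twice_diff X t ->
  ddot Y t = ddot DF t * th + ddot X t.
Proof.
move=> t0 HY [hD1 hD2] [hX1 hX2].
have e1 : \forall s \near t, derive1 Y s = derive1 DF s * th + derive1 X s.
  near=> s.
  have s0 : 0 < s by near: s; exact: lt_nbhsr.
  have dD1 : derivable DF s 1 by near: s; exact: hD1.
  have dX1 : derivable X s 1 by near: s; exact: hX1.
  have H := dD (dMc th (derivableP dD1)) (derivableP dX1).
  have nE : \near s, (fun u => DF u * th + X u) s = Y s.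
    near=> u; rewrite HY //; near: u; exact: lt_nbhsr.
  have := near_eq_is_derive nE H.
  by move=> H'; rewrite !derive1E; apply: derive_val.
rewrite /ddot derive1E.
have nE : \near t, (fun u => derive1 DF u * th + derive1 X u) t = derive1 Y t.
  by move: e1; apply: filterS => s ->.
have H := dD (dMc th (derivableP hD2)) (derivableP hX2).
have := near_eq_is_derive nE H.
move=> H'; rewrite derive_val.
by rewrite /ddot !derive1E.
Unshelve. all: by end_near. Qed.
End H.

Theorem proposition5 (R : realType)
  (theta a omega psi lam : R)
  (Y Delta xi YF DeltaF xiF : R -> R)
  (z r1 r2 Om11 Om12 Om21 Om22 Ph11 Ph12 Ph21 Ph22 : R -> R) :
  0 < a -> 0 < omega -> 0 < lam ->
  measurable_fun [set: R] Y -> measurable_fun [set: R] Delta ->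
  (forall t : R, xi t = a * sin (omega * t + psi)) ->
  (forall t : R, Y t = Delta t * theta + xi t) ->
  (* filtered signals *)
  filtered lam Y YF -> filtered lam Delta DeltaF -> filtered lam xi xiF ->
  (* transients of the filters neglected (convention) *)
  (forall t : R, 0 <= t -> YF t = DeltaF t * theta + xiF t) ->
  (forall t : R, 0 <= t -> ddot xiF t = - omega ^+ 2 * xiF t) ->
  (* z' = -z - YF, z(0) = 0 *)
  z 0 = 0 ->
  (forall t : R, 0 <= t -> is_derive t 1 z (- z t - YF t)) ->
  (* r' = A_xi r + b_xi, r(0) = 0, A_xi = [[0, DF], [-DF, -1]], b_xi = (-DF z, 0) *)
  r1 0 = 0 -> r2 0 = 0 ->
  (forall t : R, 0 <= t -> is_derive t 1 r1 (DeltaF t * r2 t - DeltaF t * z t)) ->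
  (forall t : R, 0 <= t -> is_derive t 1 r2 (- DeltaF t * r1 t - r2 t)) ->
  (* Omega' = A_xi Omega - e2 phi^T, Omega(0) = 0, phi = (ddot DF, - ddot YF) *)
  Om11 0 = 0 -> Om12 0 = 0 -> Om21 0 = 0 -> Om22 0 = 0 ->
  (forall t : R, 0 <= t -> is_derive t 1 Om11 (DeltaF t * Om21 t)) ->
  (forall t : R, 0 <= t -> is_derive t 1 Om12 (DeltaF t * Om22 t)) ->
  (forall t : R, 0 <= t ->
     is_derive t 1 Om21 (- DeltaF t * Om11 t - Om21 t - ddot DeltaF t)) ->
  (forall t : R, 0 <= t ->
     is_derive t 1 Om22 (- DeltaF t * Om12 t - Om22 t - (- ddot YF t))) ->
  (* Phi_xi' = A_xi Phi_xi, Phi_xi(0) = I_2 *)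
  Ph11 0 = 1 -> Ph12 0 = 0 -> Ph21 0 = 0 -> Ph22 0 = 1 ->
  (forall t : R, 0 <= t -> is_derive t 1 Ph11 (DeltaF t * Ph21 t)) ->
  (forall t : R, 0 <= t -> is_derive t 1 Ph12 (DeltaF t * Ph22 t)) ->
  (forall t : R, 0 <= t -> is_derive t 1 Ph21 (- DeltaF t * Ph11 t - Ph21 t)) ->
  (forall t : R, 0 <= t -> is_derive t 1 Ph22 (- DeltaF t * Ph12 t - Ph22 t)) ->
  (* conclusion, with mu = (theta / omega^2, 1 / omega^2) *)
  forall t : R, 0 <= t ->
    z t - r2 t = Ph21 t * theta + Om21 t * (theta / omega ^+ 2)
                 + Om22 t * (1 / omega ^+ 2).
Proof.
move=> a0 w0 l0 _ _ _ _ _ fD fX HYF Hxi z0 Hz r10 r20 Hr1 Hr2 O110 O120 O210 O220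
  HO11 HO12 HO21 HO22 P110 P120 P210 P220 HP11 HP12 HP21 HP22 t t0.
set c1 := theta / omega ^+ 2; set c2 := 1 / omega ^+ 2.
have w2 : omega ^+ 2 != 0 by rewrite expf_neq0 // gt_eqF.
set v1 := fun s => theta - r1 s - Ph11 s * theta - Om11 s * c1 - Om12 s * c2.
set v2 := fun s => z s - r2 s - Ph21 s * theta - Om21 s * c1 - Om22 s * c2.
have hv1 : forall s : R, 0 <= s -> is_derive s 1 v1 (DeltaF s * v2 s).
  move=> s hs.
  have H := dB (dB (dB (dB (@dC R s theta) (Hr1 s hs)) (dMc theta (HP11 s hs)))
     (dMc c1 (HO11 s hs))) (dMc c2 (HO12 s hs)).
  apply: (is_derive_eq H); rewrite /v2; ring.
have hv2r : forall s : R, 0 <= s -> is_derive s 1 v2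
   ((- z s - YF s) - (- DeltaF s * r1 s - r2 s)
    - (- DeltaF s * Ph11 s - Ph21 s) * theta
    - (- DeltaF s * Om11 s - Om21 s - ddot DeltaF s) * c1
    - (- DeltaF s * Om12 s - Om22 s - (- ddot YF s)) * c2).
  move=> s hs.
  exact: (dB (dB (dB (dB (Hz s hs) (Hr2 s hs)) (dMc theta (HP21 s hs)))
     (dMc c1 (HO21 s hs))) (dMc c2 (HO22 s hs))).
have hv2 : forall s : R, 0 < s -> is_derive s 1 v2 (- DeltaF s * v1 s - v2 s).
  move=> s hs.
  apply: (is_derive_eq (hv2r s (ltW hs))).
  have hdd : ddot YF s = ddot DeltaF s * theta + ddot xiF s.
    apply: (@ddot_lin R DeltaF xiF YF theta s hs).
    - by move=> u /ltW; exact: HYF.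
    - by have [] := fD s (ltW hs).
    - by have [] := fX s (ltW hs).
  rewrite hdd Hxi ?(ltW hs) // HYF ?(ltW hs) // /v1 /v2 /c1 /c2.
  have w1 : omega != 0 by rewrite gt_eqF.
  by field; rewrite gt_eqF.
have v10 : v1 0 = 0 by rewrite /v1 r10 P110 O110 O120; ring.
have v20 : v2 0 = 0 by rewrite /v2 z0 r20 P210 O210 O220; ring.
suff : v2 t = 0 by rewrite /v2 /= => H; lra.
move: t0; rewrite le_eqVlt => /predU1P[<-|tp]; first exact: v20.
set V := fun s => v1 s ^+ 2 + v2 s ^+ 2.
have hv2d : forall u : R, 0 <= u -> derivable v2 u 1.
  by move=> u hu; have := hv2r u hu; case.
have itv0 : forall x : R, x \in `]0, t[ -> 0 < x by move=> x; rewrite in_itv => /andP[].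
have Vc : {within `[0, t], continuous V}.
  apply: derivable_within_continuous => x xI.
  have x0 : 0 <= x by move: xI; rewrite in_itv => /andP[].
  have := dD (dSq (hv1 x x0)) (dSq (derivableP (hv2d x x0))).
  by case.
have [c cI Hc] := @MVT R V (fun s => 2 * v1 s * (DeltaF s * v2 s)
    + 2 * v2 s * (- DeltaF s * v1 s - v2 s)) 0 t tp
  (fun x xI => dD (dSq (hv1 x (ltW (itv0 x xI)))) (dSq (hv2 x (itv0 x xI)))) Vc.
have : V t <= 0.
  have E : 2 * v1 c * (DeltaF c * v2 c) + 2 * v2 c * (- DeltaF c * v1 c - v2 c)
    = - (2 * (v2 c ^+ 2)) by ring.
  move: Hc; rewrite /V /= E => Hc.
  have h := sqr_ge0 (v2 c).
  have h' : v1 0 ^+ 2 + v2 0 ^+ 2 = 0 by rewrite v10 v20 expr0n /= addr0.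
  nra.
rewrite /V => HV.
have h1 := sqr_ge0 (v1 t); have h2 := sqr_ge0 (v2 t).
have : v2 t ^+ 2 = 0 by lra.
by move/eqP; rewrite sqrf_eq0 => /eqP.
Qed.
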